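(* Let $T\in V$ be a target variable. If $\zeta_T=0$ (i.e. $T\notin\Upsilon_i$ for all $i$) and $\Upsilon$ is conservative, then $\bigcup_{i=1}^{n}MB_i(T)=MB(T)$.
   Context: Let $G=(V,E)$ be a DAG (causal Bayesian network) over a finite set $V$ of random variables with joint distribution $P$ satisfying the Markov condition with respect to $G$; causal sufficiency is assumed. For $X\in V$, $pa(X)$ and $ch(X)$ are the parents and children of $X$ in $G$, $sp(X)=\big(\bigcup_{Y\in ch(X)}pa(Y)\big)\setminus\{X\}$ is the set of spouses, and $MB(X)=pa(X)\cup ch(X)\cup sp(X)$ is the Markov blanket. There are $n\ge 1$ intervention experiments; in the $i$-th, the set $\Upsilon_i\subseteq V$ (possibly empty) is manipulated, and $\Upsilon=\{\Upsilon_1,\dots,\Upsilon_n\}$. The post-intervention DAG is $G_i=(V,E_i)$ with $E_i=\{(a,b)\in E: b\notin\Upsilon_i\}$, with distribution $P_i(V)=\prod_{V_j\notin\Upsilon_i}P(V_j\mid pa(V_j))\prod_{V_j\in\Upsilon_i}P_i(V_j)$, and $D_i$ is a dataset drawn from $P_i$. It is assumed that each $P_i$ is faithful to $G_i$ and that conditional independence tests on $D_i$ are reliable (return exactly the conditional independences of $P_i$). $MB_i(T)$ denotes the Markov blanket of $T$ found in $D_i$, i.e. the set of parents, children and spouses of $T$ in $G_i$. $\zeta_T=|\{i:T\in\Upsilon_i\}|$ is the number of experiments in which $T$ is manipulated. $\Upsilon$ is called conservative if for every $V_j\in\bigcup_{i=1}^n\Upsilon_i$ there exists $i$ with $V_j\notin\Upsilon_i$.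 *)

(* Defs.v *)
(* A DAG over a finite variable set V is an edge relation
   E : rel V (E a b = edge a -> b) with no directed cycle. *)
From mathcomp Require Import all_boot.
Set Implicit Arguments. Unset Strict Implicit. Unset Printing Implicit Defensive.

Definition acyclic (V : finType) (E : rel V) : Prop :=
  forall x y : V, E x y -> ~~ connect E y x.

Definition pa (V : finType) (E : rel V) (X : V) : {set V} := [set a | E a X].
Definition ch (V : finType) (E : rel V) (X : V) : {set V} := [set b | E X b].
Definition sp (V : finType) (E : rel V) (X : V) : {set V} :=
  (\bigcup_(Y in ch E X) pa E Y) :\ X.
Definition MB (V : finType) (E : rel V) (X : V) : {set V} :=
  pa E X :|: ch E X :|: sp E X.

(* post-intervention graph: remove all edges into manipulated variables *)
Definition intervened (V : finType) (E : rel V) (U : {set V}) : rel V :=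
  fun a b => E a b && (b \notin U).

(* MB_i(T): Markov blanket of T in G_i (as identified from D_i under
   faithfulness and reliable CI tests) *)
Definition MB_i (V : finType) (E : rel V) (n : nat) (Ups : 'I_n -> {set V})
  (i : 'I_n) (T : V) : {set V} := MB (intervened E (Ups i)) T.

Definition zeta (V : finType) (n : nat) (Ups : 'I_n -> {set V}) (T : V) : nat :=
  #|[set i : 'I_n | T \in Ups i]|.

Definition conservative (V : finType) (n : nat) (Ups : 'I_n -> {set V}) : Prop :=
  forall v : V, v \in \bigcup_(i < n) Ups i -> exists i : 'I_n, v \notin Ups i.

(* Main.v *)
Require Import Defs.
From mathcomp Require Import all_boot.

Theorem theorem2 (V : finType) (E : rel V) (n : nat) (Ups : 'I_n -> {set V})
  (T : V) :
  acyclic E -> 0 < n -> zeta Ups T = 0 -> conservative Ups ->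
  \bigcup_(i < n) MB_i E Ups i T = MB E T.
Proof.
move=> _ n0 zT cons.
have TU : forall i, T \notin Ups i.
  move=> i; apply/negP => Ti.
  move: zT; rewrite /zeta => /eqP; rewrite cards_eq0 => /eqP/setP/(_ i).
  by rewrite !inE Ti.
have ex : forall v, exists i : 'I_n, v \notin Ups i.
  move=> v; case: (boolP (v \in \bigcup_(i < n) Ups i)) => [/cons//|H].
  exists (Ordinal n0); apply/negP => Hv; move/negP: H; apply.
  by apply/bigcupP; exists (Ordinal n0).
apply/setP => x; apply/bigcupP/idP.
- case=> i _; rewrite /MB_i /MB /pa /ch /sp /intervened !inE.
  case/orP => [/orP[/andP[-> _]|/andP[-> _]]|]; rewrite ?orbT //.
  case/andP => xT /bigcupP [Y]; rewrite !inE => /andP[TY _] /andP[xY _].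
  by rewrite xT /=; apply/orP; right; apply/bigcupP; exists Y; rewrite ?inE.
- rewrite /MB /pa /ch /sp !inE; case/orP => [/orP[H|H]|].
  + exists (Ordinal n0) => //.
    by rewrite /MB_i /MB /pa /intervened !inE H TU.
  + have [i Hi] := ex x; exists i => //.
    rewrite /MB_i /MB /ch /intervened !inE H Hi; by rewrite orbT.
  + case/andP => xT /bigcupP [Y]; rewrite !inE => TY xY.
    have [i Hi] := ex Y; exists i => //.
    rewrite /MB_i /MB /sp /ch /pa /intervened !inE xT /=.
    apply/orP; right; apply/bigcupP; exists Y; by rewrite !inE ?TY ?xY Hi.
Qed.
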